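(* Let $X$ be a real Banach space and $Y$ a linear subspace of $X$ with norm $\|\cdot\|_Y$ such that $K:=U(Y)=\{g\in Y:\|g\|_Y\le1\}$ is compact in $X$, and let $C_0$ satisfy $\|g\|_X\le C_0\|g\|_Y$ for $g\in Y$. Let $\lambda_1,\dots,\lambda_m\in X^*$ with $\|\lambda_j\|_{X^*}=1$, $f\in K$, $w:=\lambda(f)$, and assume $R(K_w)_X\neq0$. Fix $\alpha>0$, $\beta>0$ and for $\mu>0$ define on $X$ $$\mathcal{L}'_\mu(g):=\|w-\lambda(g)\|^\alpha+\mu\|g\|_Y^\beta .$$ Let $C>2$. Then there is $\mu_0>0$ such that for all $0<\mu\le\mu_0$ the following hold. (a) If $\delta>0$ satisfies $\delta^\alpha\le\mu^2$, $\Sigma\subset X$ satisfies $\operatorname{dist}(K,\Sigma\cap K)_X<\delta$, and $\hat f\in\mathop{\rm argmin}_{g\in\Sigma}\mathcal{L}'_\mu(g)$ is any minimizer, then $\|f-\hat f\|_X\le C\,R(K_w)_X$. (b) If moreover $\epsilon>0$ and $\delta$ satisfy $\epsilon\le\delta^\alpha\le\frac12\mu^2$, $\Sigma$ and $\hat f$ are as in (a), and $\tilde f\in\Sigma$ satisfies $\mathcal{L}'_\mu(\tilde f)\le\mathcal{L}'_\mu(\hat f)+\epsilon$, then $\|f-\tilde f\|_X\le C\,R(K_w)_X$.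
   Context: Convention: $\|g\|_Y:=\infty$ for $g\in X\setminus Y$. $\lambda(g):=(\lambda_1(g),\dots,\lambda_m(g))$; on $\mathbb{R}^m$, $\|v\|:=\big[\frac1m\sum_{j=1}^m|v_j|^2\big]^{1/2}$. For $A,B\subset X$, $\operatorname{dist}(A,B)_X:=\sup_{a\in A}\inf_{b\in B}\|a-b\|_X$. $K_w:=\{h\in K:\lambda(h)=w\}$. For $S\subset X$, $R(S)_X:=\inf\{r:\ S\subset B(z,r)_X\text{ for some }z\in X\}$ (Chebyshev radius). *)

(* Defs.v *)
From HB Require Import structures.
From mathcomp Require Import all_boot all_order all_algebra.
From mathcomp Require Import all_classical all_reals all_analysis.
Set Implicit Arguments. Unset Strict Implicit. Unset Printing Implicit Defensive.
Import Order.TTheory GRing.Theory Num.Theory.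
Import numFieldNormedType.Exports.
Local Open Scope classical_set_scope.
Local Open Scope ring_scope.

Definition vnorm (R : realType) (m : nat) (v : 'I_m -> R) : R :=
  Num.sqrt ((m%:R)^-1 * \sum_(j < m) v j ^+ 2).

Definition dual_norm (R : realType) (X : normedModType R) (l : X -> R) : \bar R :=
  ereal_sup [set (`|l x|)%:E | x in [set x : X | `|x| <= 1]].

Definition distX (R : realType) (X : normedModType R) (A B : set X) : \bar R :=
  ereal_sup [set ereal_inf [set (`|a - b|)%:E | b in B] | a in A].

Definition cheb_radius (R : realType) (X : normedModType R) (S : set X) : \bar R :=
  ereal_inf [set r%:E | r in
     [set r : R | exists z : X, forall s, S s -> `|s - z| <= r]].

Definition normYE (R : realType) (X : normedModType R) (Y : set X) (nY : X -> R)
  (g : X) : \bar R := if `[< Y g >] then (nY g)%:E else +oo%E.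

Definition Lmu (R : realType) (X : normedModType R) (m : nat) (Y : set X)
  (nY : X -> R) (lam : 'I_m -> X -> R) (w : 'I_m -> R) (alpha beta mu : R)
  (g : X) : \bar R :=
  if `[< Y g >] then
    ((vnorm (fun j => w j - lam j g)) `^ alpha + mu * (nY g) `^ beta)%:E
  else +oo%E.

(* Main.v *)
Require Import Defs.
From HB Require Import structures.
From mathcomp Require Import all_boot all_order all_algebra.
From mathcomp Require Import all_classical all_reals all_analysis.
From mathcomp Require Import ring lra.
Import Order.TTheory GRing.Theory Num.Theory.
Import numFieldNormedType.Exports.
Local Open Scope classical_set_scope.
Local Open Scope ring_scope.
Set Implicit Arguments. Unset Strict Implicit. Unset Printing Implicit Defensive.

Lemma lam0 (R : realType) (X : normedModType R) (l : X -> R)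
 (hlin : forall a x y, l (a *: x + y) = a * l x + l y) : l 0 = 0.
Proof. have := hlin 1 0 0; rewrite scaler0 addr0 mul1r; lra. Qed.

Lemma lamZ (R : realType) (X : normedModType R) (l : X -> R)
 (hlin : forall a x y, l (a *: x + y) = a * l x + l y) a x : l (a *: x) = a * l x.
Proof. by have := hlin a x 0; rewrite addr0 (lam0 hlin) addr0. Qed.

Lemma lamB (R : realType) (X : normedModType R) (l : X -> R)
 (hlin : forall a x y, l (a *: x + y) = a * l x + l y) x y : l (x - y) = l x - l y.
Proof.
have := hlin 1 x (- y); rewrite scale1r mul1r => ->.
by rewrite -scaleN1r (lamZ hlin) mulN1r.
Qed.

Lemma lam_bound (R : realType) (X : normedModType R) (l : X -> R)
 (hlin : forall a x y, l (a *: x + y) = a * l x + l y)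
 (hn : dual_norm l = 1%E) x : `|l x| <= `|x|.
Proof.
have [->|x0] := eqVneq x 0; first by rewrite (lam0 hlin) normr0.
have nx : 0 < `|x| by rewrite normr_gt0.
set u := `|x|^-1 *: x.
have nu : `|u| = 1 by rewrite normrZ ger0_norm ?mulVf ?gt_eqF // invr_ge0 ltW.
have : ((`|l u|)%:E <= dual_norm l)%E.
  by apply: ereal_sup_ubound; exists u => //=; rewrite nu.
rewrite hn lee_fin /u (lamZ hlin) normrM ger0_norm; last by rewrite invr_ge0 ltW.
by rewrite ler_pdivrMl // mulr1.
Qed.
Lemma vnorm_ge0 (R : realType) m (v : 'I_m -> R) : 0 <= vnorm v.
Proof. exact: sqrtr_ge0. Qed.

Lemma vnorm_le (R : realType) m (v : 'I_m -> R) d : (0 < m)%N -> 0 <= d ->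
  (forall j, `|v j| <= d) -> vnorm v <= d.
Proof.
move=> hm d0 hv; rewrite /vnorm.
have mp : 0 < m%:R :> R by rewrite ltr0n.
have h : m%:R^-1 * \sum_(j < m) v j ^+ 2 <= d ^+ 2.
  rewrite ler_pdivrMl //.
  have -> : m%:R * d ^+ 2 = \sum_(j < m) d ^+ 2 by rewrite sumr_const card_ord mulr_natl.
  apply: ler_sum => j _; rewrite -real_normK ?num_real //.
  by rewrite lerXn2r ?nnegrE.
by apply: le_trans (ler_wsqrtr h) _; rewrite sqrtr_sqr ger0_norm.
Qed.

Lemma vnorm_coord (R : realType) m (v : 'I_m -> R) j :
  v j ^+ 2 <= m%:R * vnorm v ^+ 2.
Proof.
have mp : 0 < m%:R :> R by rewrite ltr0n; case: j => j /= jm; apply: leq_ltn_trans jm.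
rewrite /vnorm sqr_sqrtr; last by apply: mulr_ge0; [rewrite invr_ge0 ltW | apply: sumr_ge0 => i _; exact: sqr_ge0].
rewrite mulrA mulfV ?gt_eqF // mul1r (bigD1 j) //= lerDl.
by apply: sumr_ge0 => i _; exact: sqr_ge0.
Qed.
Lemma compact_approx (R : realType) (X : normedModType R) (K : set X) (m : nat)
  (lam : 'I_m -> X -> R) (w : 'I_m -> R) (hK : compact K)
  (hL : forall j x y, `|lam j x - lam j y| <= `|x - y|) (eta : R) (heta : 0 < eta) :
  exists2 c, 0 < c & forall x, K x -> (forall j, `|w j - lam j x| < c) ->
    exists k, (K k /\ (fun j => lam j k) = w) /\ `|x - k| < eta.
Proof.
apply: contrapT => H.
pose P c := [set x | K x /\ (forall j, `|w j - lam j x| < c) /\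
   forall k, (K k /\ (fun j => lam j k) = w) -> eta <= `|x - k|].
have Pne : forall c, 0 < c -> P c !=set0.
  move=> c c0; apply: contrapT => Pe; apply: H; exists c => // x Kx hx.
  apply: contrapT => nk; apply: Pe; exists x; split => //; split => // k hk.
  by rewrite leNgt; apply/negP => lt; apply: nk; exists k.
pose F := filter_from [set c : R | 0 < c] P.
have FF : Filter F.
  apply: filter_from_filter; first by exists 1 => /=.
  move=> i j i0 j0; exists (Num.min i j); first by rewrite /= lt_min i0 j0.
  move=> x [Kx [hx hk]]; split; (split; first done); split => // l;
    by apply: (lt_le_trans (hx l)); rewrite ge_min lexx ?orbT.
have PF : ProperFilter F by apply: filter_from_proper => c c0; exact: Pne.
have FK : F K by exists 1 => //= x [].
have [p [Kp cl]] := hK F PF FK.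
have hw : (fun j => lam j p) = w.
  apply/funext => j; apply: contrapT => /eqP ne.
  have d0 : 0 < `|w j - lam j p| by rewrite normr_gt0 subr_eq0 eq_sym.
  set d := `|w j - lam j p| in d0.
  have d2 : 0 < d / 2 by rewrite divr_gt0.
  have [x [[Kx [hx _]] bx]] := cl (P (d / 2)) (ball p (d / 2))
     (ex_intro2 _ _ (d / 2) d2 (fun x h => h)) (nbhsx_ballx p (d / 2) d2).
  move: bx; rewrite -ball_normE /ball_ => bx.
  have := hx j; have := hL j x p; rewrite distrC => hl h1.
  have : d < d.
    rewrite {1}/d (_ : w j - lam j p = (w j - lam j x) + (lam j x - lam j p)); last first.
      by rewrite addrA subrK.
    apply: (le_lt_trans (ler_normD _ _)).
    rewrite [X in _ < X](splitr d); apply: ltrD => //.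
    rewrite distrC; apply: le_lt_trans hl _; rewrite distrC; exact: bx.
  by rewrite /d ltxx.
have [x [[Kx [hx hk]] bx]] := cl (P 1) (ball p eta)
     (ex_intro2 _ _ 1 ltr01 (fun x h => h)) (nbhsx_ballx p eta heta).
move: bx; rewrite -ball_normE /ball_ /= distrC => bx.
have := hk p (conj Kp hw); rewrite leNgt bx //.
Qed.

Lemma key (R : realType) (X : normedModType R) (Y : set X) (nY : X -> R)
  (hYZ : forall (a : R) x, Y x -> Y (a *: x))
  (hn0 : forall x, Y x -> 0 <= nY x)
  (hnZ : forall (a : R) x, Y x -> nY (a *: x) = `|a| * nY x)
  (hK : compact [set g | Y g /\ nY g <= 1])
  (C0 : R) (hC0 : forall g, Y g -> `|g| <= C0 * nY g)
  (m : nat) (hm : (0 < m)%N) (lam : 'I_m -> X -> R)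
  (hL : forall j x y, `|lam j x - lam j y| <= `|x - y|)
  (f : X) (alpha beta : R) (halpha : 0 < alpha) (hbeta : 0 < beta)
  (rho C : R) (hrho : 0 < rho) (hC : 2 < C)
  (hKw : forall k, (Y k /\ nY k <= 1) /\ (fun j => lam j k) = (fun j => lam j f) ->
     `|f - k| <= 2 * rho) :
  exists2 mu0 : R, 0 < mu0 & forall mu : R, 0 < mu -> mu <= mu0 -> forall g,
    (Lmu Y nY lam (fun j => lam j f) alpha beta mu g <= (mu ^+ 2 + mu)%:E)%E ->
    `|f - g| <= C * rho.
Proof.
set w := fun j => lam j f.
set eta := (C - 2) * rho.
have eta0 : 0 < eta by rewrite mulr_gt0 // subr_gt0.
have eta2 : 0 < eta / 2 by rewrite divr_gt0.
have [c c0 hc] := compact_approx w hK hL eta2.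
have mp : 0 < m%:R :> R by rewrite ltr0n.
have m1 : 1 <= m%:R :> R by rewrite ler1n.
set t := Num.min c eta / (2 * (`|C0| + 1)).
have C1 : 0 < `|C0| + 1 by rewrite ltr_wpDl.
have t0 : 0 < t by rewrite divr_gt0 ?lt_min ?c0 ?eta0 // mulr_gt0.
have Ct : `|C0| * t <= Num.min c eta / 2.
  apply: (@le_trans _ _ ((`|C0| + 1) * t)); first by rewrite ler_pM2r // lerDl.
  by rewrite /t le_eqVlt; apply/orP; left; apply/eqP; field; rewrite gt_eqF.
set q := c / (2 * m%:R).
have q0 : 0 < q by rewrite divr_gt0 // mulr_gt0.
have mq : m%:R * q = c / 2 by rewrite /q; field; rewrite gt_eqF.
have qc : q <= c / 2.
  have -> : q = c / 2 / m%:R by rewrite /q; field; rewrite gt_eqF.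
  by rewrite ler_pdivrMr // ler_peMr // ltW // divr_gt0.
have t1 : 1 < (1 + t) `^ beta.
  have h := @gt0_ltr_powR _ beta hbeta 1 (1 + t).
  rewrite powR1 in h; apply: h.
  - by rewrite nnegrE ler01.
  - by rewrite nnegrE addr_ge0 // (ltW t0).
  - by rewrite ltrDl.
set mu0 := Num.min 1 (Num.min (q `^ alpha / 4) (((1 + t) `^ beta - 1) / 2)).
have qa : 0 < q `^ alpha by rewrite powR_gt0.
exists mu0.
  by rewrite !lt_min ltr01 divr_gt0 //= divr_gt0 // subr_gt0.
move=> mu mu_gt0 mumu0 g.
rewrite /Lmu; case: asboolP => [Yg|_]; last by rewrite leye_eq.
rewrite lee_fin => hLg.
have mu1 : mu <= 1 by apply: le_trans mumu0 _; rewrite ge_min lexx.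
have muq : mu <= q `^ alpha / 4.
  by apply: le_trans mumu0 _; rewrite !ge_min lexx ?orbT.
have mut : mu <= ((1 + t) `^ beta - 1) / 2.
  by apply: le_trans mumu0 _; rewrite !ge_min lexx ?orbT.
set A := vnorm _ `^ alpha in hLg.
set B := nY g `^ beta in hLg.
have A0 : 0 <= A by exact: powR_ge0.
have B0 : 0 <= B by exact: powR_ge0.
have mu2 : mu ^+ 2 <= mu by rewrite expr2 ler_piMl // ltW.
have vq : vnorm (fun j => w j - lam j g) < q.
  rewrite ltNge; apply/negP => qv.
  have := @ge0_ler_powR _ alpha (ltW halpha) q (vnorm (fun j => w j - lam j g)).
  rewrite !nnegrE ltW // vnorm_ge0 => /(_ isT isT qv); rewrite -/A => qA.
  have : q `^ alpha <= 2 * mu.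
    apply: (le_trans qA); apply: (le_trans (y := A + mu * B)).
      by rewrite lerDl mulr_ge0 // ltW.
    by apply: (le_trans hLg); rewrite mulr2n mulrDl mul1r lerD2r.
  move=> h; lra.
have ng : nY g < 1 + t.
  rewrite ltNge; apply/negP => tn.
  have tB : (1 + t) `^ beta <= B.
    apply: (ge0_ler_powR (ltW hbeta)) => //; rewrite nnegrE.
    + by rewrite addr_ge0 // (ltW t0).
    + exact: hn0.
  have : B <= mu + 1.
    rewrite -(@ler_pM2l _ mu) // mulrDr mulr1.
    apply: le_trans (_ : A + mu * B <= _); first by rewrite lerDr.
    by apply: (le_trans hLg); rewrite lerD2r expr2.
  move=> Bm; have := le_trans tB Bm; move: mut mu_gt0; lra.
have [g' [Kg' gg']] : exists g', (Y g' /\ nY g' <= 1) /\ `|g - g'| <= `|C0| * t.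
  have [n1|n1] := leP (nY g) 1.
    by exists g; split => //; rewrite subrr normr0 mulr_ge0 // ltW.
  have n0 : 0 < nY g by apply: lt_trans n1; exact: ltr01.
  exists ((nY g)^-1 *: g); split.
    split; first exact: hYZ.
    rewrite hnZ // ger0_norm; last by rewrite invr_ge0 (ltW n0).
    by rewrite mulVf // gt_eqF.
  have -> : g - (nY g)^-1 *: g = (1 - (nY g)^-1) *: g by rewrite scalerBl scale1r.
  rewrite normrZ ger0_norm; last by rewrite subr_ge0 invf_le1 // ltW.
  apply: (le_trans (ler_wpM2l _ (hC0 _ Yg))); first by rewrite subr_ge0 invf_le1 // ltW.
  have -> : (1 - (nY g)^-1) * (C0 * nY g) = C0 * (nY g - 1).
    by field; rewrite gt_eqF.
  apply: (le_trans (ler_wpM2r _ (real_ler_norm (num_real C0)))); first by rewrite subr_ge0 ltW.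
  by rewrite ler_wpM2l // ltW // ltrBlDl.
have hj : forall j, `|w j - lam j g'| < c.
  move=> j.
  have h1 : `|w j - lam j g| < c / 2.
    have := vnorm_coord (fun j => w j - lam j g) j; rewrite /= => hv.
    have vv : vnorm (fun j => w j - lam j g) ^+ 2 < q ^+ 2.
      by rewrite ltrXn2r // ?nnegrE ?vnorm_ge0 // ltW.
    have hh : (w j - lam j g) ^+ 2 < (c / 2) ^+ 2.
      apply: le_lt_trans hv _.
      apply: (lt_le_trans (y := m%:R * q ^+ 2)); first by rewrite ltr_pM2l.
      by rewrite expr2 mulrA mq [X in _ <= X]expr2; apply: ler_wpM2l => //; rewrite divr_ge0 // (ltW c0).
    rewrite -(real_normK (num_real (w j - lam j g))) in hh.
    rewrite ltNge; apply/negP => hc2; move: hh; rewrite ltNge => /negP; apply.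
    by rewrite lerXn2r // nnegrE divr_ge0 // ltW.
  have h2 : `|lam j g - lam j g'| <= c / 2.
    apply: (le_trans (hL j g g')); apply: (le_trans gg'); apply: (le_trans Ct).
    by rewrite ler_pM2r // ge_min lexx.
  have -> : w j - lam j g' = (w j - lam j g) + (lam j g - lam j g') by rewrite addrA subrK.
  apply: (le_lt_trans (ler_normD _ _)); rewrite [X in _ < X](splitr c).
  exact: ltr_leD h1 h2.
have [k [Kwk gk]] := hc g' Kg' hj.
have fk := hKw k Kwk.
have g'g : `|g - g'| <= eta / 2.
  apply: (le_trans gg'); apply: (le_trans Ct).
  by rewrite ler_pM2r // ge_min lexx orbT.
have -> : f - g = (f - k) + (k - g') + (g' - g) by rewrite -!addrA (addrA (- k)) addNr add0r (addrA (-g')) addNr add0r.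
apply: (le_trans (ler_normD _ _)); apply: (le_trans (lerD (ler_normD _ _) (lexx _))).
rewrite distrC in gk; rewrite distrC in g'g.
have : C * rho = 2 * rho + eta by rewrite /eta; ring.
move: fk gk g'g; lra.
Qed.

Lemma Lbound (R : realType) (X : normedModType R) (Y : set X) (nY : X -> R)
  (hn0 : forall x, Y x -> 0 <= nY x)
  (m : nat) (hm : (0 < m)%N) (lam : 'I_m -> X -> R)
  (hL : forall j x y, `|lam j x - lam j y| <= `|x - y|)
  (f g0 : X) (alpha beta mu delta : R) (halpha : 0 < alpha) (hbeta : 0 < beta)
  (hmu : 0 <= mu) (hd : 0 <= delta) (Yg : Y g0) (ng : nY g0 <= 1)
  (fg : `|f - g0| <= delta) :
  (Lmu Y nY lam (fun j => lam j f) alpha beta mu g0 <= (delta `^ alpha + mu)%:E)%E.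
Proof.
rewrite /Lmu asboolT // lee_fin; apply: lerD.
  apply: (ge0_ler_powR (ltW halpha)); rewrite ?nnegrE ?vnorm_ge0 //.
  by apply: vnorm_le => // j /=; exact: le_trans (hL j f g0) fg.
apply: ler_piMr => //.
have := @ge0_ler_powR _ beta (ltW hbeta) (nY g0) 1.
rewrite powR1; apply; rewrite ?nnegrE ?ler01 //; exact: hn0.
Qed.

Theorem theorem6p2 (R : realType) (X : completeNormedModType R)
  (Y : set X) (nY : X -> R)
  (* Y is a linear subspace of X *)
  (hY0 : Y 0) (hYD : forall x y, Y x -> Y y -> Y (x + y))
  (hYZ : forall (a : R) x, Y x -> Y (a *: x))
  (* nY is a norm on Y *)
  (hn0 : forall x, Y x -> 0 <= nY x)
  (hndef : forall x, Y x -> nY x = 0 -> x = 0)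
  (hnZ : forall (a : R) x, Y x -> nY (a *: x) = `|a| * nY x)
  (hnD : forall x y, Y x -> Y y -> nY (x + y) <= nY x + nY y)
  (* K = U(Y) is compact in X *)
  (hK : compact [set g | Y g /\ nY g <= 1])
  (C0 : R) (hC0 : forall g, Y g -> `|g| <= C0 * nY g)
  (m : nat) (hm : (0 < m)%N) (lam : 'I_m -> X -> R)
  (hlamlin : forall j (a : R) x y, lam j (a *: x + y) = a * lam j x + lam j y)
  (hlamcont : forall j, continuous (lam j))
  (hlamnorm : forall j, dual_norm (lam j) = 1%E)
  (f : X) (hf : Y f /\ nY f <= 1)
  (hR : cheb_radius [set h | (Y h /\ nY h <= 1) /\ (fun j => lam j h) = (fun j => lam j f)]
          <> 0%E)
  (alpha beta : R) (halpha : 0 < alpha) (hbeta : 0 < beta)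
  (C : R) (hC : 2 < C) :
  let K := [set g | Y g /\ nY g <= 1] in
  let w := fun j => lam j f in
  let Kw := [set h | K h /\ (fun j => lam j h) = w] in
  let L := fun mu => Lmu Y nY lam w alpha beta mu in
  exists mu0 : R, 0 < mu0 /\
  forall mu : R, 0 < mu -> mu <= mu0 ->
    (forall (delta : R) (Sigma : set X) (fh : X),
       0 < delta -> delta `^ alpha <= mu ^+ 2 ->
       (distX K (Sigma `&` K) < delta%:E)%E ->
       Sigma fh -> (forall g, Sigma g -> (L mu fh <= L mu g)%E) ->
       ((`|f - fh|)%:E <= C%:E * cheb_radius Kw)%E) /\
    (forall (eps delta : R) (Sigma : set X) (fh ft : X),
       0 < eps -> 0 < delta ->
       eps <= delta `^ alpha -> delta `^ alpha <= 2^-1 * mu ^+ 2 ->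
       (distX K (Sigma `&` K) < delta%:E)%E ->
       Sigma fh -> (forall g, Sigma g -> (L mu fh <= L mu g)%E) ->
       Sigma ft -> (L mu ft <= L mu fh + eps%:E)%E ->
       ((`|f - ft|)%:E <= C%:E * cheb_radius Kw)%E).
Proof.
move=> K w Kw L.
have hb j x := lam_bound (hlamlin j) (hlamnorm j) x.
have hL : forall j x y, `|lam j x - lam j y| <= `|x - y|.
  by move=> j x y; rewrite -(lamB (hlamlin j)); exact: hb.
have fKw : Kw f := conj hf erefl.
have Rge0 : (0 <= cheb_radius Kw)%E.
  apply: le_ereal_inf_tmp => _ [r [z hz] <-]; rewrite lee_fin.
  exact: le_trans (normr_ge0 _) (hz f fKw).
have hKw2 : forall k, Kw k -> ((`|f - k| / 2)%:E <= cheb_radius Kw)%E.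
  move=> k hk; apply: le_ereal_inf_tmp => _ [r [z hz] <-]; rewrite lee_fin.
  have := hz f fKw; have := hz k hk.
  have := ler_normB (f - z) (k - z).
  rewrite (_ : f - z - (k - z) = f - k); last by rewrite opprB addrA subrK.
  move=> h1 h2 h3; lra.
have hdist : forall (Sigma : set X) (delta : R),
    (distX K (Sigma `&` K) < delta%:E)%E ->
    exists g0, (Sigma `&` K) g0 /\ `|f - g0| <= delta.
  move=> Sigma delta hd.
  have : (ereal_inf [set (`|f - b|)%:E | b in Sigma `&` K] < delta%:E)%E.
    apply: le_lt_trans hd; apply: ereal_sup_ubound; exists f => //.
  move=> /ereal_inf_lt [_ [b hb' <-]]; rewrite lte_fin => hfb.
  by exists b; split => //; exact: ltW.
have hR' : cheb_radius Kw <> 0%E := hR.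
case E : (cheb_radius Kw) => [rho| |]; last by move: Rge0; rewrite E.
  rewrite E in hR' Rge0; rewrite lee_fin in Rge0.
  have rho0 : 0 < rho.
    rewrite lt_neqAle Rge0 andbT; apply/eqP => h; apply: hR'; rewrite -h //.
  have hKw : forall k, (Y k /\ nY k <= 1) /\ (fun j => lam j k) = (fun j => lam j f) ->
     `|f - k| <= 2 * rho.
    move=> k hk; have := hKw2 k hk; rewrite E lee_fin => h; lra.
  have [mu0 mu00 hmu] := @key R X Y nY hYZ hn0 hnZ hK C0 hC0 m hm lam hL f alpha beta
    halpha hbeta rho C rho0 hC hKw.
  exists mu0; split => // mu mu_gt0 mumu0; split.
    move=> delta Sigma fh d0 dmu hd Sfh hmin.
    have [g0 [[Sg0 [Yg0 ng0]] fg0]] := hdist Sigma delta hd.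
    have Lg0 := @Lbound R X Y nY hn0 m hm lam hL f g0 alpha beta mu delta halpha hbeta
      (ltW mu_gt0) (ltW d0) Yg0 ng0 fg0.
    rewrite -EFinM lee_fin; apply: (hmu mu) => //.
    apply: le_trans (hmin _ Sg0) _; apply: le_trans Lg0 _.
    by rewrite lee_fin lerD2r.
  move=> eps delta Sigma fh ft e0 d0 ed dmu hd Sfh hmin Sft hft.
  have [g0 [[Sg0 [Yg0 ng0]] fg0]] := hdist Sigma delta hd.
  have Lg0 := @Lbound R X Y nY hn0 m hm lam hL f g0 alpha beta mu delta halpha hbeta
    (ltW mu_gt0) (ltW d0) Yg0 ng0 fg0.
  rewrite -EFinM lee_fin; apply: (hmu mu) => //.
  apply: le_trans hft _; apply: le_trans (leeD2r _ (le_trans (hmin _ Sg0) Lg0)) _.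
  rewrite -EFinD lee_fin; lra.
exists 1; split => // mu _ _; split => *; rewrite muleC gt0_mulye ?leey // lte_fin; lra.
Qed.
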